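(* Let $n \ge 1$. Consider $2n$ water tanks: $n$ ''red'' tanks each initially containing $1$ unit of water, and $n$ ''blue'' tanks each initially containing $0$ units. There is a strategy (a finite sequence of pairwise equilibrations) after which every red tank contains strictly less than $\frac{2}{\sqrt{n}}$ units of water and every blue tank contains strictly more than $1 - \frac{2}{\sqrt{n}}$ units of water.
   Context: A configuration of water tanks is an assignment of a real number (the amount of water, or water level) $x_a$ to each tank $a$. Equilibrating two tanks $a \neq b$ replaces both $x_a$ and $x_b$ by $\frac{x_a + x_b}{2}$ and leaves all other tanks unchanged. A strategy is a finite sequence of (unordered) pairs of distinct tanks, executed as the corresponding sequence of equilibrations. *)

(* Defs.v *)
From mathcomp Require Import all_boot all_order all_algebra.
From mathcomp Require Import reals.
Set Implicit Arguments. Unset Strict Implicit. Unset Printing Implicit Defensive.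
Import Order.TTheory GRing.Theory Num.Theory.
Local Open Scope ring_scope.

Definition config (R : realType) (T : Type) := T -> R.

Definition equilibrate (R : realType) (T : eqType) (a b : T) (x : config R T)
  : config R T :=
  fun c => if (c == a) || (c == b) then (x a + x b) / 2 else x c.

Definition is_strategy (T : eqType) (s : seq (T * T)) : Prop :=
  all (fun p => p.1 != p.2) s.

Definition run (R : realType) (T : eqType) (s : seq (T * T)) (x : config R T)
  : config R T :=
  foldl (fun y p => equilibrate p.1 p.2 y) x s.

(* Red tanks are inl i, blue tanks are inr i, i : 'I_n. *)
Definition red_blue_init (R : realType) (n : nat) : config R ('I_n + 'I_n) :=
  fun c => match c with inl _ => 1 | inr _ => 0 end.

(* Main.v *)
Require Import Defs.
From mathcomp Require Import all_boot all_order all_algebra.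
From mathcomp Require Import reals.
From Stdlib Require Import FunctionalExtensionality.
From mathcomp Require Import ring lra zify.
From Stdlib Require Import Lia.
Import Order.TTheory GRing.Theory Num.Theory.
Local Open Scope ring_scope.
Set Implicit Arguments. Unset Strict Implicit. Unset Printing Implicit Defensive.

Lemma eqE1 (R : realType) (T : eqType) (a b : T) (x : config R T) :
  equilibrate a b x a = (x a + x b) / 2.
Proof. by rewrite /equilibrate eqxx. Qed.

Lemma eqE2 (R : realType) (T : eqType) (a b : T) (x : config R T) :
  equilibrate a b x b = (x a + x b) / 2.
Proof. by rewrite /equilibrate eqxx orbT. Qed.

Lemma eqE3 (R : realType) (T : eqType) (a b c : T) (x : config R T) :
  c != a -> c != b -> equilibrate a b x c = x c.
Proof. by move=> /negbTE ha /negbTE hb; rewrite /equilibrate ha hb. Qed.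

Lemma run_cons (R : realType) (T : eqType) p s (x : config R T) :
  run (p :: s) x = run s (equilibrate p.1 p.2 x).
Proof. by []. Qed.

Lemma run_cat (R : realType) (T : eqType) s1 s2 (x : config R T) :
  run (s1 ++ s2) x = run s2 (run s1 x).
Proof. by rewrite /run foldl_cat. Qed.

Lemma run_nil (R : realType) (T : eqType) (x : config R T) : run [::] x = x.
Proof. by []. Qed.

Lemma run_compl (R : realType) (T : eqType) s (x : config R T) c :
  run s (fun d => 1 - x d) c = 1 - run s x c.
Proof.
elim: s x c => [//|p s IH] x c.
rewrite !run_cons -IH; congr (run s _ c).
apply: functional_extensionality => d; rewrite /equilibrate.
by case: ifP => // _; field.
Qed.
Definition inj_on (T : eqType) (f : nat -> T) (lo hi : nat) :=
  forall i j, (lo <= i < hi)%N -> (lo <= j < hi)%N -> f i = f j -> i = j.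

Definition Mpairs (T : eqType) (f : nat -> T) (o N a len : nat) : seq (T * T) :=
  [seq (f (o + t)%N, f (o + N + t)%N) | t <- iota a len].

Lemma inj_neq (T : eqType) (f : nat -> T) lo hi i j :
  inj_on f lo hi -> (lo <= i < hi)%N -> (lo <= j < hi)%N -> i <> j -> f i != f j.
Proof. by move=> hf h1 h2 hij; apply/eqP => e; apply: hij; apply: hf. Qed.

Lemma Mpairs_S (T : eqType) (f : nat -> T) o N a len :
  Mpairs f o N a len.+1 = (f (o + a)%N, f (o + N + a)%N) :: Mpairs f o N a.+1 len.
Proof. by []. Qed.

Lemma Mrun (R : realType) (T : eqType) (f : nat -> T) o N len : forall a (z : config R T),
  inj_on f o (o + N + N) -> (a + len <= N)%N ->
  (forall c, (forall t, (a <= t < a + len)%N -> c != f (o + t)%N /\ c != f (o + N + t)%N) ->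
     run (Mpairs f o N a len) z c = z c) /\
  (forall t, (a <= t < a + len)%N ->
     run (Mpairs f o N a len) z (f (o + t)%N) = (z (f (o + t)%N) + z (f (o + N + t)%N)) / 2 /\
     run (Mpairs f o N a len) z (f (o + N + t)%N) = (z (f (o + t)%N) + z (f (o + N + t)%N)) / 2).
Proof.
elim: len => [|len IH] a z hf hlen.
  split=> // t; by rewrite addn0 ltnNge andbN.
have hne : forall t u, (t < N)%N -> (u < N)%N ->
   [/\ (t <> u -> f (o + t)%N != f (o + u)%N),
       f (o + t)%N != f (o + N + u)%N &
       (t <> u -> f (o + N + t)%N != f (o + N + u)%N)].
  move=> t u ht hu; split.
  - move=> htu; apply: (inj_neq hf); try lia.
  - apply: (inj_neq hf); lia.
  - move=> htu; apply: (inj_neq hf); lia.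
rewrite Mpairs_S run_cons /=.
have hlen' : (a.+1 + len <= N)%N by lia.
have [IH1 IH2] := IH a.+1 (equilibrate (f (o + a)%N) (f (o + N + a)%N) z) hf hlen'.
have haN : (a < N)%N by lia.
split.
  move=> c hc; rewrite IH1; last first.
    move=> t ht; apply: hc; lia.
  have [h1 h2] := hc a (ltac:(lia)).
  by rewrite eqE3.
move=> t ht; case: (eqVneq t a) => [->|hta].
  have hnot1 : forall u, (a.+1 <= u < a.+1 + len)%N ->
      f (o + a)%N != f (o + u)%N /\ f (o + a)%N != f (o + N + u)%N.
    move=> u hu; have [A B C] := hne a u haN (ltac:(lia)); split => //.
    by apply: A; lia.
  have hnot2 : forall u, (a.+1 <= u < a.+1 + len)%N ->
      f (o + N + a)%N != f (o + u)%N /\ f (o + N + a)%N != f (o + N + u)%N.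
    move=> u hu; have [A B C] := hne u a (ltac:(lia)) haN; split.
      by rewrite eq_sym.
    by rewrite eq_sym; apply: C; lia.
  rewrite (IH1 _ hnot1) (IH1 _ hnot2); split; [exact: eqE1 | exact: eqE2].
have ht' : (a.+1 <= t < a.+1 + len)%N by move/eqP: hta; lia.
have [-> ->] := IH2 t ht'.
have htN : (t < N)%N by lia.
have [A1 B1 C1] := hne t a htN haN.
have [A2 B2 C2] := hne a t haN htN.
have hta' : t <> a by apply/eqP.
rewrite (@eqE3 _ _ _ _ (f (o + t)%N)); last by [].
  rewrite (@eqE3 _ _ _ _ (f (o + N + t)%N)) //.
    by rewrite eq_sym.
  by apply: C1.
by apply: A1.
Qed.

Fixpoint H (T : eqType) (f : nat -> T) (k o : nat) : seq (T * T) :=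
  match k with
  | 0 => [::]
  | k'.+1 => H f k' o ++ H f k' (o + 2 ^ k') ++ Mpairs f o (2 ^ k') 0 (2 ^ k')
  end.

Lemma inj_sub (T : eqType) (f : nat -> T) lo hi lo' hi' :
  inj_on f lo hi -> (lo <= lo')%N -> (hi' <= hi)%N -> inj_on f lo' hi'.
Proof. move=> h h1 h2 i j h3 h4; apply: h; lia. Qed.

Lemma Hrun (R : realType) (T : eqType) (f : nat -> T) k : forall o (x : config R T),
  inj_on f o (o + 2 ^ k) ->
  (forall c, (forall i, (o <= i < o + 2 ^ k)%N -> c != f i) -> run (H f k o) x c = x c) /\
  (forall i, (o <= i < o + 2 ^ k)%N ->
     run (H f k o) x (f i) = (\sum_(o <= j < o + 2 ^ k) x (f j)) / (2 ^ k)%:R).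
Proof.
elim: k => [|k IH] o x hf.
  split=> // i hi; have -> : i = o by lia.
  by rewrite expn0 addn1 big_nat1 divr1.
set N := (2 ^ k)%N.
have hN : (2 ^ k.+1 = N + N)%N by rewrite expnS mul2n addnn.
have N0 : (0 < N)%N by rewrite expn_gt0.
rewrite hN addnA in hf *.
have hf1 : inj_on f o (o + N) by apply: (inj_sub (lo:=o) (hi:=o+N+N)) => //; lia.
have hf2 : inj_on f (o + N) (o + N + N) by apply: (inj_sub (lo:=o) (hi:=o+N+N)) => //; lia.
rewrite /= -/N !run_cat.
set y := run (H f k o) x.
set z := run (H f k (o + N)) y.
have [Ia Ib] := IH o x hf1.
have [Ja Jb] := IH (o + N) y hf2.
have [Ma Mb] := Mrun z (a := 0) hf (leqnn N).
split.
  move=> c hc; rewrite Ma; last by move=> t ht; split; apply: hc; lia.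
  rewrite /z Ja; last by move=> i hi; apply: hc; lia.
  by rewrite /y Ia //; move=> i hi; apply: hc; lia.
have yx2 : forall j, (o + N <= j < o + N + N)%N -> y (f j) = x (f j).
  move=> j hj; rewrite /y Ia // => i hi; apply: (inj_neq hf) => //; lia.
have z1 : forall j, (o <= j < o + N)%N -> z (f j) = (\sum_(o <= j < o + N) x (f j)) / N%:R.
  move=> j hj; rewrite /z Ja; first by rewrite /y Ib.
  move=> i hi; apply: (inj_neq hf) => //; lia.
have z2 : forall j, (o + N <= j < o + N + N)%N ->
    z (f j) = (\sum_(o + N <= j < o + N + N) x (f j)) / N%:R.
  move=> j hj; rewrite /z Jb //; congr (_ / _); apply: eq_big_nat => i hi.
  exact: yx2.
have Nr : (N%:R : R) != 0 by rewrite pnatr_eq0 -lt0n.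
rewrite (big_cat_nat _ (n := o + N)) /=; [|lia|lia].
move=> i hi.
have [hlo|hhi] := ltnP i (o + N).
  have -> : i = (o + (i - o))%N by lia.
  have [-> _] := Mb (i - o)%N (ltac:(lia)).
  rewrite z1; last lia.
  rewrite z2; last lia.
  rewrite natrD; field; rewrite Nr andbT -natrD pnatr_eq0; lia.
have -> : i = (o + N + (i - o - N))%N by lia.
have [_ ->] := Mb (i - o - N)%N (ltac:(lia)).
rewrite z1; last lia.
rewrite z2; last lia.
rewrite natrD; field; rewrite Nr andbT -natrD pnatr_eq0; lia.
Qed.

Lemma H_strategy (T : eqType) (f : nat -> T) k : forall o,
  inj_on f o (o + 2 ^ k) -> is_strategy (H f k o).
Proof.
elim: k => [//|k IH] o hf.
set N := (2 ^ k)%N.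
have hN : (2 ^ k.+1 = N + N)%N by rewrite expnS mul2n addnn.
rewrite hN addnA in hf.
rewrite /= /is_strategy !all_cat; apply/and3P; split.
- apply: IH; apply: (inj_sub (lo:=o) (hi:=o+N+N)) => //; lia.
- apply: IH; apply: (inj_sub (lo:=o) (hi:=o+N+N)) => //; lia.
- apply/allP => p /mapP [t]; rewrite mem_iota => ht -> /=.
  apply: (inj_neq hf); lia.
Qed.

Lemma sum_nat_ge0 (R : realType) (F : nat -> R) m n :
  (forall i, (m <= i < n)%N -> 0 <= F i) -> 0 <= \sum_(m <= i < n) F i.
Proof. move=> h; rewrite big_nat_cond; apply: sumr_ge0 => i /andP [hi _]; exact: h. Qed.

Lemma two_blocks (R : realType) (T : eqType) (f : nat -> T) n k (x : config R T) :
  (2 ^ k <= n)%N -> (n < 2 ^ k + 2 ^ k)%N -> inj_on f 0 n ->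
  (forall a, (a < n)%N -> 0 <= x (f a)) ->
  forall a, (a < n)%N ->
  run (H f k 0 ++ H f k (n - 2 ^ k)) x (f a) <= (\sum_(0 <= i < n) x (f i)) / (2 ^ k)%:R.
Proof.
set N := (2 ^ k)%N => hNn hn2 hf hx a ha.
have N0 : (0 < N)%N by rewrite expn_gt0.
have Nr : (0 : R) < N%:R by rewrite ltr0n.
have hf1 : inj_on f 0 (0 + N) by apply: (inj_sub (lo:=0) (hi:=n)) => //; lia.
have hf2 : inj_on f (n - N) (n - N + N) by apply: (inj_sub (lo:=0) (hi:=n)) => //; lia.
rewrite run_cat.
set y := run (H f k 0) x.
have [Ia Ib] := Hrun x hf1.
have [Ja Jb] := Hrun y hf2.
set S1 := \sum_(0 <= j < 0 + N) x (f j).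
have yx : forall j, (N <= j < n)%N -> y (f j) = x (f j).
  move=> j hj; rewrite /y Ia // => i hi; apply: (inj_neq hf) => //; lia.
have S1ge0 : 0 <= S1 by apply: sum_nat_ge0 => i hi; apply: hx; lia.
have yge0 : forall j, (j < n)%N -> 0 <= y (f j).
  move=> j hj; have [hjN|hjN] := ltnP j N.
    by rewrite /y Ib; [apply: divr_ge0 => //; apply: ltW|lia].
  by rewrite yx ?hx //; lia.
have Sy : \sum_(0 <= i < n) y (f i) = \sum_(0 <= i < n) x (f i).
  rewrite (big_cat_nat _ (n := N)) /=; [|lia|lia].
  rewrite [in RHS](big_cat_nat _ (n := N)) /=; [|lia|lia].
  congr (_ + _); last by apply: eq_big_nat => i hi; apply: yx; lia.
  rewrite (eq_big_nat _ _ (F2 := fun _ => S1 / N%:R)); last first.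
    by move=> i hi; rewrite /y Ib //; lia.
  by rewrite sumr_const_nat subn0 -[_ *+ N]mulr_natr divfK ?gt_eqF // /S1 add0n.
have hSx : 0 <= \sum_(0 <= i < n) x (f i) by apply: sum_nat_ge0 => i hi; apply: hx; lia.
have [hlo|hhi] := ltnP a (n - N).
  rewrite Ja; last by move=> i hi; apply: (inj_neq hf) => //; lia.
  rewrite /y Ib; last lia.
  apply: ler_wpM2r; first by rewrite invr_ge0 ltW.
  rewrite add0n (big_cat_nat _ (m := 0) (n := N) (p := n)) /=; [|lia|lia].
  rewrite lerDl; apply: sum_nat_ge0 => i hi; apply: hx; lia.
rewrite Jb; last lia.
apply: ler_wpM2r; first by rewrite invr_ge0 ltW.
rewrite -Sy (big_cat_nat _ (m := 0) (n := n - N) (p := n)) /=; [|lia|lia].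
have -> : (n - N + N = n)%N by lia.
rewrite lerDr; apply: sum_nat_ge0 => i hi; apply: yge0; lia.
Qed.

Fixpoint v (R : realType) (i : nat) : nat -> R :=
  match i with
  | 0 => fun _ => 0
  | i'.+1 => fix w (j : nat) : R :=
      match j with
      | 0 => 1
      | j'.+1 => (v R i' j'.+1 + w j') / 2
      end
  end.

Lemma v0 (R : realType) j : v R 0 j = 0. Proof. by []. Qed.
Lemma vS0 (R : realType) i : v R i.+1 0 = 1. Proof. by []. Qed.
Lemma vSS (R : realType) i j : v R i.+1 j.+1 = (v R i j.+1 + v R i.+1 j) / 2.
Proof. by []. Qed.

Lemma v01 (R : realType) i j : 0 <= v R i j <= 1.
Proof.
elim: i j => [|i IHi] j; first by rewrite v0 lexx ler01.
elim: j => [|j IHj]; first by rewrite vS0 ler01 lexx.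
rewrite vSS; have /andP [h1 h2] := IHi j.+1; move/andP: IHj => [h3 h4].
apply/andP; split; lra.
Qed.

Definition C (R : realType) (m j : nat) : R := \sum_(a < m) v R a.+1 j.

Lemma C0 (R : realType) j : C R 0 j = 0. Proof. by rewrite /C big_ord0. Qed.
Lemma CS (R : realType) m j : C R m.+1 j = C R m j + v R m.+1 j.
Proof. by rewrite /C big_ord_recr. Qed.
Lemma Cm0 (R : realType) m : C R m 0 = m%:R.
Proof. elim: m => [|m IH]; first by rewrite C0. by rewrite CS IH vS0 -natr1. Qed.

Lemma Ctel (R : realType) m j : C R m j = C R m j.+1 + v R m j.+1.
Proof.
elim: m => [|m IH]; first by rewrite !C0 v0 addr0.
rewrite !CS IH vSS; lra.
Qed.

Lemma Crec (R : realType) m j : C R m.+1 j.+1 = (C R m j.+1 + C R m.+1 j) / 2.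
Proof. rewrite (Ctel R m.+1 j) CS vSS; lra. Qed.

Lemma CB (R : realType) m j : C R m j + \sum_(a < j) v R m a.+1 = m%:R.
Proof.
elim: j => [|j IH]; first by rewrite big_ord0 addr0 Cm0.
by rewrite big_ord_recr /= addrCA -Ctel addrC.
Qed.

Definition F (R : realType) (m j : nat) : R :=
  ((m%:R - j%:R) + Num.sqrt ((m%:R - j%:R) ^+ 2 + (m%:R + j%:R))) / 2.

Lemma sqrt_avg (R : realType) (a b : R) : 0 <= a -> 0 <= b ->
  Num.sqrt a + Num.sqrt b <= 2 * Num.sqrt ((a + b) / 2).
Proof.
move=> ha hb.
have p0 := sqrtr_ge0 a; have q0 := sqrtr_ge0 b; have r0 := sqrtr_ge0 ((a + b) / 2).
have pa := sqr_sqrtr ha; have qb := sqr_sqrtr hb.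
have rc : Num.sqrt ((a + b) / 2) ^+ 2 = (a + b) / 2.
  by apply: sqr_sqrtr; apply: divr_ge0; lra.
move: p0 q0 r0 pa qb rc.
set p := Num.sqrt a; set q := Num.sqrt b; set r := Num.sqrt ((a + b) / 2).
move=> p0 q0 r0 pa qb rc.
rewrite expr2 in pa; rewrite expr2 in qb; rewrite expr2 in rc.
have r4 : (2 * r) * (2 * r) = 2 * a + 2 * b.
  by rewrite mulrACA rc; field.
have pq := sqr_ge0 (p - q); rewrite expr2 in pq.
have h : (p + q) * (p + q) <= (2 * r) * (2 * r) by rewrite r4 -pa -qb; nra.
rewrite leNgt; apply/negP => h2; nra.
Qed.

Lemma sqrt_ge_id (R : realType) (x y : R) : 0 <= x -> 0 <= y -> x <= Num.sqrt (x ^+ 2 + y).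
Proof.
move=> hx hy; rewrite -{1}(ger0_norm hx) -sqrtr_sqr ler_sqrt; last first.
  by rewrite addr_ge0 ?sqr_ge0.
by rewrite lerDl.
Qed.

Lemma CF (R : realType) m j : C R m j <= F R m j.
Proof.
elim: m j => [|m IHm] j.
  rewrite C0 /F.
  have -> : ((0%:R : R) - j%:R) ^+ 2 + (0%:R + j%:R) = j%:R ^+ 2 + j%:R.
    by rewrite sub0r sqrrN add0r.
  have := sqrt_ge_id (ler0n R j) (ler0n R j); lra.
elim: j => [|j IHj].
  rewrite Cm0 /F subr0 addr0.
  have := @sqrt_ge_id R (m.+1)%:R (m.+1)%:R (ler0n _ _) (ler0n _ _).
  lra.
rewrite Crec.
apply: (le_trans (y := (F R m j.+1 + F R m.+1 j) / 2)).
  have := IHm j.+1; lra.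
rewrite /F -[(m.+1)%:R]natr1 -[(j.+1)%:R]natr1.
set x : R := m%:R; set y : R := j%:R.
have hx : 0 <= x by apply: ler0n.
have hy : 0 <= y by apply: ler0n.
have := sqrt_avg (a := (x - (y + 1)) ^+ 2 + (x + (y + 1)))
                 (b := (x + 1 - y) ^+ 2 + (x + 1 + y)).
have -> : ((x - (y + 1)) ^+ 2 + (x + (y + 1)) + ((x + 1 - y) ^+ 2 + (x + 1 + y))) / 2
        = (x + 1 - (y + 1)) ^+ 2 + (x + 1 + (y + 1)) by field.
move=> H; have := H (ltac:(rewrite addr_ge0 ?sqr_ge0 //; lra)) (ltac:(rewrite addr_ge0 ?sqr_ge0 //; lra)).
lra.
Qed.

Definition rr (m i : nat) : 'I_m.+1 + 'I_m.+1 := inl (inord i).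
Definition bb (m i : nat) : 'I_m.+1 + 'I_m.+1 := inr (inord i).
Definition col (m j i : nat) := [seq (rr m t, bb m j) | t <- iota 0%N i].
Definition grid (m j : nat) := flatten [seq col m t m.+1 | t <- iota 0%N j].

Definition X (R : realType) (m j i : nat) : config R ('I_m.+1 + 'I_m.+1) :=
  fun c => match c with
  | inl a => if (a < i)%N then v R a.+1 j.+1 else v R a.+1 j
  | inr c => if (c < j)%N then v R m.+1 c.+1
             else if (c == j :> nat) then v R i j.+1 else 0
  end.

Arguments X : clear implicits.
Arguments X R (m j i)%_nat_scope.
Arguments col (m j i)%_nat_scope.
Arguments grid (m j)%_nat_scope.

Lemma eq_inord (m : nat) (a : 'I_m.+1) i : (i < m.+1)%N -> (a == inord i) = (val a == i).
Proof. by move=> hi; rewrite -(inj_eq val_inj) /= inordK. Qed.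

Lemma col_S m j i : col m j i.+1 = col m j i ++ [:: (rr m i, bb m j)].
Proof. by rewrite /col -[i.+1]addn1 iotaD map_cat. Qed.

Lemma grid_S m j : grid m j.+1 = grid m j ++ col m j m.+1.
Proof. by rewrite /grid -[j.+1]addn1 iotaD map_cat flatten_cat /= cats0. Qed.

Lemma XL (R : realType) m j i (a : 'I_m.+1) : X R m j i (inl a) =
  if (a < i)%N then v R a.+1 j.+1 else v R a.+1 j.
Proof. by []. Qed.
Lemma XR (R : realType) m j i (c : 'I_m.+1) : X R m j i (inr c) =
  if (c < j)%N then v R m.+1 c.+1 else if (c == j :> nat) then v R i j.+1 else 0.
Proof. by []. Qed.

Lemma sum_eqE (k : nat) (a b : 'I_k) :
  [/\ (inl a == inl b :> 'I_k + 'I_k) = (a == b),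
      (inr a == inr b :> 'I_k + 'I_k) = (a == b),
      (inl a == inr b :> 'I_k + 'I_k) = false &
      (inr a == inl b :> 'I_k + 'I_k) = false].
Proof. by []. Qed.

Lemma col_run (R : realType) m j i : (j < m.+1)%N -> (i <= m.+1)%N ->
  run (col m j i) (X R m j 0) = X R m j i.
Proof.
move=> hj; elim: i => [//|i IH] hi.
rewrite col_S run_cat IH; last lia.
rewrite /run /=; apply: functional_extensionality => c.
rewrite /equilibrate /rr /bb.
case: c => [a|c].
  have [-> _ _ _] := sum_eqE a (inord i).
  have [_ _ -> _] := sum_eqE a (inord j).
  rewrite orbF eq_inord; last lia.
  case: (eqVneq (val a) i) => [ha|ha].
    rewrite XL XR !inordK; try lia.
    by rewrite XL ha !ltnn ltnSn eqxx vSS; field.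
  by rewrite !XL [in RHS]ltnS [(a <= i)%N]leq_eqVlt (negbTE ha).
have [_ _ _ ->] := sum_eqE c (inord i).
have [_ -> _ _] := sum_eqE c (inord j).
rewrite eq_inord; last lia.
case: (eqVneq (val c) j) => [hc|hc].
  rewrite XL XR !inordK; try lia.
  by rewrite XR hc !ltnn eqxx XR hc ltnn eqxx orFb vSS; field.
by rewrite !XR (negbTE hc).
Qed.

Lemma X_next (R : realType) m j : X R m j m.+1 = X R m j.+1 0.
Proof.
apply: functional_extensionality => c; case: c => [a|c].
  by rewrite !XL ltn_ord.
rewrite !XR; case: (ltngtP (val c) j) => h.
- by have -> : (val c < j.+1)%N = true by lia.
- have -> : (val c < j.+1)%N = false by lia.
  by case: (val c == j.+1); rewrite ?v0.
- by rewrite h ltnSn.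
Qed.

Lemma grid_run (R : realType) m j : (j <= m.+1)%N ->
  run (grid m j) (X R m 0 0) = X R m j 0.
Proof.
elim: j => [//|j IH] hj.
rewrite grid_S run_cat IH; last lia.
by rewrite col_run // X_next.
Qed.

Lemma X_init (R : realType) m : X R m 0 0 = @red_blue_init R m.+1.
Proof.
apply: functional_extensionality => c; case: c => [a|c] //=.
by case: (val c == 0)%N.
Qed.

Lemma final_ineq (R : realType) (n N : nat) (c : R) :
  (0 < n)%N -> (n < N + N)%N -> c <= F R n n -> c / N%:R < 2 / Num.sqrt n%:R.
Proof.
move=> n0 hnN hc.
have N0 : (0 < N)%N by lia.
have Nr : (0 : R) < N%:R by rewrite ltr0n.
have nr : (0 : R) < n%:R by rewrite ltr0n.
have nN : (n%:R : R) < N%:R + N%:R by rewrite -natrD ltr_nat.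
move: hc; rewrite /F subrr expr0n /= add0r add0r => hc.
set t := Num.sqrt (n%:R + n%:R) in hc *.
set q := Num.sqrt (n%:R : R).
have t0 : 0 <= t by apply: sqrtr_ge0.
have q0 : 0 < q by rewrite sqrtr_gt0.
have tt : t * t = n%:R + n%:R by rewrite -expr2 sqr_sqrtr // addr_ge0 // ltW.
have qq : q * q = n%:R by rewrite -expr2 sqr_sqrtr // ltW.
have tq : t * q < 2 * (N%:R + N%:R).
  rewrite ltNge; apply/negP => h.
  have h2 : (t * q) * (t * q) = 2 * (n%:R * n%:R).
    by rewrite mulrACA tt qq; ring.
  nra.
rewrite ltr_pdivrMr // mulrAC ltr_pdivlMr //.
have : c * q <= t / 2 * q by apply: ler_wpM2r => //; apply: ltW.
nra.
Qed.

Lemma rr_inj m : inj_on (rr m) 0 m.+1.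
Proof.
move=> i j hi hj [] /(congr1 (@nat_of_ord _)) h; rewrite !inordK in h; lia.
Qed.

Lemma bb_inj m : inj_on (bb m) 0 m.+1.
Proof.
move=> i j hi hj [] /(congr1 (@nat_of_ord _)) h; rewrite !inordK in h; lia.
Qed.

Lemma grid_strategy m j : is_strategy (grid m j).
Proof.
apply/allP => p /flattenP [l /mapP [t _ ->]] /mapP [u _ ->] //.
Qed.

Unset Implicit Arguments.

Theorem theorem1p1 (R : realType) (n : nat) (hn : (1 <= n)%N) :
  exists s : seq (('I_n + 'I_n) * ('I_n + 'I_n)),
    is_strategy s /\
    (forall i : 'I_n, run s (@red_blue_init R n) (inl i) < 2 / Num.sqrt (n%:R)) /\
    (forall i : 'I_n, run s (@red_blue_init R n) (inr i) > 1 - 2 / Num.sqrt (n%:R)).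
Proof.
case: n hn => [//|m] _.
set k := trunc_log 2 m.+1.
have /andP [hk1 hk2] := @trunc_log_bounds 2 m.+1 (ltac:(by [])) (ltac:(by [])).
rewrite -/k in hk1 hk2.
set N := (2 ^ k)%N in hk1 hk2.
have hN2 : (m.+1 < N + N)%N by move: hk2; rewrite expnS mul2n addnn.
have hNl : (m.+1 - N + N = m.+1)%N by lia.
have ir1 : inj_on (rr m) 0 (0 + N) by refine (inj_sub (@rr_inj m) _ _); lia.
have ir2 : inj_on (rr m) (m.+1 - N) (m.+1 - N + N) by refine (inj_sub (@rr_inj m) _ _); lia.
have ib1 : inj_on (bb m) 0 (0 + N) by refine (inj_sub (@bb_inj m) _ _); lia.
have ib2 : inj_on (bb m) (m.+1 - N) (m.+1 - N + N) by refine (inj_sub (@bb_inj m) _ _); lia.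
set Hr := H (rr m) k 0 ++ H (rr m) k (m.+1 - N).
set Hb := H (bb m) k 0 ++ H (bb m) k (m.+1 - N).
exists (grid m m.+1 ++ Hr ++ Hb).
have Hx : run (grid m m.+1) (@red_blue_init R m.+1) = X R m m.+1 0.
  by rewrite -X_init grid_run.
set x0 := X R m m.+1 0 in Hx.
have Csum : \sum_(0 <= i < m.+1) x0 (rr m i) = C R m.+1 m.+1.
  rewrite /C -(big_mkord xpredT (fun a => v R a.+1 m.+1)); apply: eq_big_nat => i hi.
  by rewrite /x0 /rr XL inordK.
have Csum' : \sum_(0 <= i < m.+1) (1 - x0 (bb m i)) = C R m.+1 m.+1.
  have := CB R m.+1 m.+1; rewrite -(big_mkord xpredT (fun a => v R m.+1 a.+1)) => h.
  have e : \sum_(0 <= i < m.+1) x0 (bb m i) = \sum_(0 <= i < m.+1) v R m.+1 i.+1.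
    apply: eq_big_nat => i hi; rewrite /x0 /bb XR inordK; last lia.
    by have -> : (i < m.+1)%N by lia.
  by rewrite sumrB sumr_const_nat subn0 -h e addrK.
have CFb := CF R m.+1 m.+1.
split.
  rewrite /is_strategy all_cat; apply/andP; split; first exact: grid_strategy.
  rewrite all_cat; apply/andP; split; rewrite all_cat; apply/andP; split;
    by apply: H_strategy.
split.
  move=> i; have -> : inl i = rr m i by rewrite /rr inord_val.
  rewrite run_cat run_cat Hx.
  have [Ba _] := Hrun (run Hr x0) ib1.
  have [Ba' _] := Hrun (run (H (bb m) k 0) (run Hr x0)) ib2.
  rewrite /Hb run_cat Ba'; last by [].
  rewrite Ba; last by [].
  have hlt := @final_ineq R m.+1 N _ (ltn0Sn m) hN2 CFb.
  apply: (le_lt_trans _ hlt).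
  rewrite -Csum; apply: two_blocks => //.
  - exact: rr_inj.
  - move=> a ha; rewrite /x0 /rr XL ltn0; by have /andP [] := v01 R (inord a : 'I_m.+1).+1 m.+1.
move=> i; have -> : inr i = bb m i by rewrite /bb inord_val.
rewrite run_cat run_cat Hx.
set z := run Hr x0.
have zb : forall a, (a < m.+1)%N -> z (bb m a) = x0 (bb m a).
  move=> a ha.
  have [Ra _] := Hrun x0 ir1.
  have [Ra' _] := Hrun (run (H (rr m) k 0) x0) ir2.
  by rewrite /z /Hr run_cat Ra' // Ra.
have -> : run Hb z (bb m i) = 1 - run Hb (fun d => 1 - z d) (bb m i).
  by rewrite run_compl opprB addrC subrK.
have hlt := @final_ineq R m.+1 N _ (ltn0Sn m) hN2 CFb.
suff : run Hb (fun d => 1 - z d) (bb m i) < 2 / Num.sqrt (m.+1)%:R by lra.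
apply: (le_lt_trans _ hlt).
rewrite -Csum'.
have -> : \sum_(0 <= i < m.+1) (1 - x0 (bb m i)) = \sum_(0 <= i < m.+1) (1 - z (bb m i)).
  by apply: eq_big_nat => a ha; rewrite zb.
apply: two_blocks => //.
- exact: bb_inj.
- move=> a ha; rewrite zb // /x0 /bb XR inordK // ha subr_ge0.
  by have /andP [] := v01 R m.+1 a.+1.
Qed.
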